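(* Let $h,n\geq2$ and $V\leq S_h$. Then $V\times\{id\}$ is a symmetry group with respect to $(h,n)$ if and only if it is an anonymity group with respect to $(h,n)$. In particular, every anonymity group with respect to $(h,n)$ is a symmetry group with respect to $(h,n)$.
   Context: Permutations compose as $(\sigma\tau)(x)=\sigma(\tau(x))$. Let $G=S_h\times S_n$ and $\mathcal{P}=(S_n)^h$ (preference profiles), with $G$ acting by $(p^{(\varphi,\psi)})_i=\psi\,p_{\varphi^{-1}(i)}$. A social preference function (SPF) is any $F:\mathcal{P}\to S_n$. Its symmetry group is $G(F)=\{(\varphi,\psi)\in G: F(p^{(\varphi,\psi)})=\psi F(p)\ \forall p\}$ and its anonymity group is $G_1(F)=G(F)\cap(S_h\times\{id\})$. $U\leq G$ is a symmetry group with respect to $(h,n)$ if $U=G(F)$ for some SPF $F$; $U\leq S_h\times\{id\}$ is an anonymity group with respect to $(h,n)$ if $U=G_1(F)$ for some SPF $F$. *)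

(* Defs.v *)
From mathcomp Require Import all_boot all_fingroup.
Set Implicit Arguments. Unset Strict Implicit. Unset Printing Implicit Defensive.

Local Open Scope group_scope.

(* Composition in the paper's convention: (comp s t) x = s (t x).
   In MathComp, (s * t) x = t (s x), hence comp s t := t * s. *)
Definition comp (T : finType) (s t : {perm T}) : {perm T} := t * s.

Definition profile (h n : nat) := {ffun 'I_h -> {perm 'I_n}}.

Definition Gelt (h n : nat) := ({perm 'I_h} * {perm 'I_n})%type.

Definition act (h n : nat) (g : Gelt h n) (p : profile h n) : profile h n :=
  [ffun i => comp g.2 (p (g.1^-1 i))].

Definition symgroup (h n : nat) (F : profile h n -> {perm 'I_n}) : {set Gelt h n} :=
  [set g : Gelt h n | [forall p : profile h n, F (act g p) == comp g.2 (F p)]].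

Definition Sh_id (h n : nat) : {set Gelt h n} :=
  setX [set: {perm 'I_h}] [set 1 : {perm 'I_n}].

Definition anongroup (h n : nat) (F : profile h n -> {perm 'I_n}) : {set Gelt h n} :=
  symgroup F :&: Sh_id h n.

Definition is_symmetry_group (h n : nat) (U : {set Gelt h n}) : Prop :=
  exists F : profile h n -> {perm 'I_n}, symgroup F = U.

Definition is_anonymity_group (h n : nat) (U : {set Gelt h n}) : Prop :=
  exists F : profile h n -> {perm 'I_n}, anongroup F = U.

(* Main.v *)
Require Import Defs.
From mathcomp Require Import all_boot all_fingroup.
Set Implicit Arguments. Unset Strict Implicit. Unset Printing Implicit Defensive.

Local Open Scope group_scope.

Definition isconst (h n : nat) (p : profile h n) : bool :=
  [exists s : {perm 'I_n}, p == [ffun => s]].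

Definition Fmod (h n : nat) (F : profile h n -> {perm 'I_n}) (p : profile h n) :=
  if isconst p then 1 else F p.

Lemma act_id1 h n (g : Gelt h n) p : g.2 = 1 -> Defs.act g p = [ffun i => p (g.1^-1 i)].
Proof. move=> e; apply/ffunP=> i; by rewrite !ffunE /Defs.comp e mulg1. Qed.

Lemma const_fix h n (g : Gelt h n) p : g.2 = 1 -> isconst p -> Defs.act g p = p.
Proof.
move=> e /existsP [s /eqP ->]; rewrite act_id1 //; apply/ffunP=> i; by rewrite !ffunE.
Qed.

Lemma const_back h n (g : Gelt h n) p : g.2 = 1 -> isconst (Defs.act g p) -> isconst p.
Proof.
move=> e /existsP [s /eqP E]; rewrite /isconst; apply/existsP; exists s; apply/eqP/ffunP=> i.
have := f_equal (fun f : profile h n => f (g.1 i)) E; rewrite /= act_id1 // !ffunE permK => ->.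
by [] || rewrite ffunE.
Qed.

Lemma symFmod h n (F : profile h n -> {perm 'I_n}) : symgroup (Fmod F) = anongroup F.
Proof.
apply/setP=> g; rewrite /anongroup /Sh_id !inE.
apply/idP/idP.
- move/forallP=> H.
  have e : g.2 = 1.
    have := H ([ffun => 1] : profile h n); rewrite /Fmod.
    have -> : isconst ([ffun => 1] : profile h n) by rewrite /isconst; apply/existsP; exists 1.
    have -> : isconst (Defs.act g ([ffun => 1] : profile h n)).
      rewrite /isconst; apply/existsP; exists g.2; apply/eqP/ffunP=> i; by rewrite !ffunE /Defs.comp mul1g.
    by rewrite /Defs.comp mul1g => /eqP <-.
  rewrite e eqxx !andbT; apply/forallP=> p.
  case c: (isconst p); first by rewrite const_fix // /Defs.comp mulg1.
  have := H p; rewrite /Fmod c e /Defs.comp mulg1.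
  case c': (isconst (Defs.act g p)); first by rewrite (const_back e c') in c.
  done.
- case/and3P=> /forallP H _ /eqP e; apply/forallP=> p; rewrite /Fmod.
  case c: (isconst p); first by rewrite const_fix // c e /Defs.comp mulg1.
  case c': (isconst (Defs.act g p)); first by rewrite (const_back e c') in c.
  exact: H.
Qed.

Lemma sub_anon h n (X : {set Gelt h n}) (F : profile h n -> {perm 'I_n}) :
  X \subset Sh_id h n -> symgroup F = X -> anongroup F = X.
Proof. by move=> sX E; rewrite /anongroup E; apply/setIidPl. Qed.

Theorem mainTheorem6 (h n : nat) (hh : 2 <= h) (hn : 2 <= n) :
  (forall V : {group {perm 'I_h}},
     is_symmetry_group (setX (V : {set {perm 'I_h}}) [set 1%g : {perm 'I_n}])
     <-> is_anonymity_group (setX (V : {set {perm 'I_h}}) [set 1%g : {perm 'I_n}]))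
  /\ (forall U : {set Gelt h n}, is_anonymity_group U -> is_symmetry_group U).
Proof.
split; last by move=> U [F E]; exists (Fmod F); rewrite symFmod.
move=> V; split.
- move=> [F E]; exists F; apply: sub_anon E.
  apply/subsetP=> g; rewrite /Sh_id !inE => /andP [_ ->]; by rewrite andbT.
- by move=> [F E]; exists (Fmod F); rewrite symFmod.
Qed.
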